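(* For every $13$-card Rummy hand $h$ and every choice of wild-card joker $wcj$, we have $\mathrm{MinDist}(h,wcj)\le 8$.
   Context: Rummy is played with a single standard deck (ranks $A,2,3,\dots,10,J,Q,K$ in each of the four suits) together with a printed joker. A hand is a set of $13$ distinct cards from this deck. A wild-card joker $wcj$ is a designated card; every card of the same rank as $wcj$ (and the printed joker) is a joker, which may stand in for any other card. A meld is one of: a pure sequence (at least $3$ cards of the same suit with consecutive ranks in the order $A\,2\,3\,4\,5\,6\,7\,8\,9\,10\,J\,Q\,K\,A$, i.e. the ace may be low or high but sequences do not wrap around through $K\,A\,2$); an impure sequence (as a pure sequence, but one or more cards replaced by jokers); a pure set (at least $3$ cards of the same rank and pairwise different suits); an impure set (as a pure set, but one or more cards replaced by jokers). A hand is declarable if it can be partitioned into melds of which at least one is a pure sequence and at least one other is a (pure or impure) sequence. For hands $h,h'$, $d_{wcj}(h,h')$ is the minimum number of cards of $h$ that must be replaced to obtain $h'$ (i.e. $13-|h\cap h'|$), and $\mathrm{MinDist}(h,wcj)=\min\{d_{wcj}(h,h') : h' \text{ a declarable hand}\}$. *)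

(* Defs.v *)
From mathcomp Require Import all_boot.
Set Implicit Arguments. Unset Strict Implicit. Unset Printing Implicit Defensive.

(* A card (type rcard): [Some (s, r)] is the standard card of suit [s : 'I_4] and rank
   [r : 'I_13] (rank index 0 = A, 1..9 = 2..10, 10 = J, 11 = Q, 12 = K);
   [None] is the printed joker.  The deck is the 53 inhabitants of [rcard]. *)
Definition rcard := option ('I_4 * 'I_13).

(* The wild-rcard joker is a standard card [w]; a rcard is a joker iff it is the
   printed joker or has the same rank as [w]. *)
Definition jokerb (w : 'I_4 * 'I_13) (c : rcard) : bool :=
  if c is Some p then p.2 == w.2 else true.

(* Positions in the order A 2 ... K A : rank index r sits at position r+1,
   and the ace (r = 0) additionally at position 14.  [pos_in a k r]: some
   position of rank r lies in the window [a, a+k). *)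
Definition pos_in (a k : nat) (r : 'I_13) : bool :=
  ((a <= r.+1) && (r.+1 < a + k)) || [&& (r == 0 :> nat), a <= 14 & 14 < a + k].

Definition in_window (s : 'I_4) (a k : nat) (c : rcard) : bool :=
  if c is Some p then (p.1 == s) && pos_in a k p.2 else false.

(* Pure sequence: >= 3 cards, all of suit s, forming exactly the cards of
   suit s in a window of |T| consecutive positions (no wrap-around). *)
Definition pure_seqb (T : {set rcard}) : bool :=
  (3 <= #|T|) &&
  [exists s : 'I_4, exists a : 'I_16, T == [set c | in_window s a #|T| c]].

(* Pure set: >= 3 cards of the same rank (pairwise distinct suits is then
   automatic, as cards are distinct). *)
Definition pure_setb (T : {set rcard}) : bool :=
  (3 <= #|T|) &&
  [exists r : 'I_13, T \subset [set c : rcard | if c is Some p then p.2 == r else false]].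

(* M is obtained from a pure meld T (of kind P) by replacing one or more of
   its cards by jokers: M = N ∪ J, N ⊆ T the cards kept, J a nonempty set of
   jokers (disjoint from N) filling the |T| - |N| remaining places. *)
Definition impure_of (P : pred {set rcard}) (w : 'I_4 * 'I_13) (M : {set rcard}) : bool :=
  [exists N : {set rcard}, exists J : {set rcard}, exists T : {set rcard},
    [&& M == N :|: J, [disjoint N & J], J != set0,
        J \subset [set c | jokerb w c], P T, N \subset T &
        #|N| + #|J| == #|T| ]].

Definition impure_seqb w M := impure_of pure_seqb w M.
Definition impure_setb w M := impure_of pure_setb w M.

Definition seqb w M := pure_seqb M || impure_seqb w M.

Definition meldb w M :=
  [|| pure_seqb M, impure_seqb w M, pure_setb M | impure_setb w M].

Definition declarableb (w : 'I_4 * 'I_13) (h : {set rcard}) : bool :=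
  (#|h| == 13) &&
  [exists P : {set {set rcard}},
    [&& partition P h, [forall M in P, meldb w M] &
        [exists M1 in P, exists M2 in P,
           [&& M1 != M2, pure_seqb M1 & seqb w M2]]]].

Definition dist (h h' : {set rcard}) : nat := 13 - #|h :&: h'|.

(* MinDist(h, wcj) = min of d(h,h') over declarable h' (13 is a harmless
   default: d <= 13 always and declarable hands exist). *)
Definition MinDist (h : {set rcard}) (w : 'I_4 * 'I_13) : nat :=
  \big[minn/13]_(h' : {set rcard} | declarableb w h') dist h h'.

(* Main.v *)
Require Import Defs.
From mathcomp Require Import all_boot.
From mathcomp Require Import zify.

Definition posn (a k i : nat) : bool :=
  ((a <= i.+1) && (i.+1 < a + k)) || [&& (i == 0), a <= 14 & 14 < a + k].

Lemma posn_mono a c i : posn c 6 i -> c = a \/ c = a.+1 -> posn a 7 i.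
Proof. rewrite /posn => H [E|E]; subst c; lia. Qed.

Lemma posn_disj i : posn 1 6 i -> posn 7 7 i -> False.
Proof. rewrite /posn; lia. Qed.

Fixpoint blists (n : nat) : seq (seq bool) :=
  if n is m.+1 then [seq b :: l | b <- [:: true; false], l <- blists m] else [:: [::]].

Lemma blistsP n (b : seq bool) : size b = n -> b \in blists n.
Proof.
elim: n b => [|n IH] [|x b] //= [Hs].
have Hb := IH b Hs; case: x; rewrite !mem_cat; apply/orP; [left|right; apply/orP; left]; exact: map_f.
Qed.

Definition cnt (b : seq bool) a k := count (fun i => nth false b i && posn a k i) (iota 0 13).

Definition chk (b : seq bool) :=
  [&& cnt b 1 6 + cnt b 7 7 == count id b,
   (count id b < 4) || has (fun a => (1 <= a) && (a + 4 <= 15) && (2 <= cnt b a 4)) (iota 0 16),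
   (count id b < 3) || has (fun a => (1 <= a) && (a + 7 <= 15) && ((2 <= cnt b a 6) || (2 <= cnt b a.+1 6))) (iota 0 16) &
   (count id b < 1) || has (fun a => (1 <= a) && (a + 3 <= 15) && (1 <= cnt b a 3)) (iota 0 16)].

Lemma chk_all : all chk (blists 13).
Proof. vm_compute. reflexivity. Qed.

Definition chkw a k := (1 <= a) && (a + k <= 15) && (k <= 13) ==> (cnt (nseq 13 true) a k == k).
Lemma chkw_all : all (fun a => all (chkw a) (iota 0 16)) (iota 0 16).
Proof. vm_compute. reflexivity. Qed.

Lemma chkP b : size b = 13 -> chk b.
Proof. by move=> Hs; apply: (allP chk_all); apply: blistsP. Qed.

Lemma cnt_full b : size b = 13 -> cnt b 1 6 + cnt b 7 7 = count id b.
Proof. by move/chkP => /and4P [/eqP] ->. Qed.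

Lemma cnt4 b : size b = 13 -> 4 <= count id b ->
  exists a, [/\ 1 <= a, a + 4 <= 15 & 2 <= cnt b a 4].
Proof.
move/chkP => /and4P [_ H _ _] H4; move: H; rewrite ltnNge H4 => /orP [//|/hasP [a _]].
by case/andP => /andP [? ?] ?; exists a.
Qed.

Lemma cnt3 b : size b = 13 -> 3 <= count id b ->
  exists a c, [/\ 1 <= a, a + 7 <= 15, c = a \/ c = a.+1 & 2 <= cnt b c 6].
Proof.
move/chkP => /and4P [_ _ H _] H4; move: H; rewrite ltnNge H4 => /orP [//|/hasP [a _]].
case/andP => /andP [? ?] /orP [] ?; first by exists a, a; split => //; left.
by exists a, a.+1; split => //; right.
Qed.

Lemma cnt1 b : size b = 13 -> 1 <= count id b ->
  exists a, [/\ 1 <= a, a + 3 <= 15 & 1 <= cnt b a 3].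
Proof.
move/chkP => /and4P [_ _ _ H] H4; move: H; rewrite ltnNge H4 => /orP [//|/hasP [a _]].
by case/andP => /andP [? ?] ?; exists a.
Qed.

Lemma cntw a k : 1 <= a -> a + k <= 15 -> k <= 13 -> cnt (nseq 13 true) a k = k.
Proof.
move=> H1 H2 H3.
have Ha : a \in iota 0 16 by rewrite mem_iota; lia.
have Hk : k \in iota 0 16 by rewrite mem_iota; lia.
have := allP (allP chkw_all a Ha) k Hk; rewrite /chkw H1 H2 H3 /=; by move/eqP.
Qed.

Definition win (s : 'I_4) (a k : nat) : {set rcard} := [set c | in_window s a k c].
Definition bits (h : {set rcard}) (s : 'I_4) : seq bool :=
  [seq (Some (s, r) \in h) | r <- enum 'I_13].

Lemma size_bits h s : size (bits h s) = 13.
Proof. by rewrite size_map size_enum_ord. Qed.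

Lemma nth_bits h s (r : 'I_13) : nth false (bits h s) r = (Some (s, r) \in h).
Proof. by rewrite (nth_map ord0) ?size_enum_ord ?ltn_ord // nth_ord_enum. Qed.

Lemma card_ord_set (P : pred 'I_13) : #|[set r | P r]| = count P (enum 'I_13).
Proof.
by rewrite cardE /enum_mem size_filter count_filter; apply: eq_count => r; rewrite !inE andbT.
Qed.

Lemma cov_win h s a k : #|h :&: win s a k| = cnt (bits h s) a k.
Proof.
have -> : h :&: win s a k =
   (fun r => Some (s, r)) @: [set r : 'I_13 | (Some (s, r) \in h) && posn a k r].
  apply/setP => c; rewrite !inE; apply/idP/imsetP.
    case: c => [[s' r]|]; rewrite /= ?andbF // => /and3P [Hh /eqP Es Hp]; subst s'.
    by exists r => //; rewrite inE Hh.
  by case=> r; rewrite inE => /andP [Hh Hp] ->; rewrite Hh /= eqxx.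
rewrite card_imset; last by move=> r1 r2 [].
rewrite card_ord_set /cnt -val_enum_ord count_map; apply: eq_count => r /=.
by rewrite nth_bits.
Qed.

Lemma card_win s a k : 1 <= a -> a + k <= 15 -> k <= 13 -> #|win s a k| = k.
Proof.
move=> H1 H2 H3; rewrite -(setTI (win s a k)) cov_win.
rewrite -{2}(@cntw a k H1 H2 H3).
rewrite /cnt; apply: eq_in_count => i; rewrite mem_iota => /andP [_ Hi].
have Hi13 : i < 13 by [].
by rewrite nth_nseq Hi13 /bits (nth_map ord0) ?size_enum_ord ?in_setT.
Qed.

Lemma pure_intro (T : {set rcard}) s k (a : 'I_16) :
  #|T| = k -> 3 <= k -> T = [set c | in_window s a k c] -> pure_seqb T.
Proof.
move=> Hc H3 HT; rewrite /pure_seqb Hc H3 /=.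
apply/existsP; exists s; apply/existsP; exists a; by rewrite {1}HT.
Qed.

Lemma pure_win s a k : 1 <= a -> a + k <= 15 -> 3 <= k -> k <= 13 -> pure_seqb (win s a k).
Proof.
move=> H1 H2 H3 Hk.
have Ha : a < 16 by lia.
apply: (@pure_intro _ s k (Ordinal Ha)) => //.
exact: card_win.
Qed.

Lemma win_disj s t a b k l : s != t -> [disjoint win s a k & win t b l].
Proof.
move=> st; apply/pred0P => -[[s' r]|] /=; rewrite !inE //=.
case: (s' =P s) => [E|] //=; subst s'; by rewrite (negbTE st) !andbF.
Qed.

Lemma cardsU_disj (A B : {set rcard}) : [disjoint A & B] -> #|A :|: B| = #|A| + #|B|.
Proof. by move=> d; rewrite cardsU (disjoint_setI0 d) cards0 subn0. Qed.

Lemma suit_count h s : count id (bits h s) = #|[set r : 'I_13 | Some (s, r) \in h]|.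
Proof. by rewrite card_ord_set /bits count_map. Qed.

Lemma card_h (h : {set rcard}) :
  #|h| = (None \in h) + \sum_(s < 4) count id (bits h s).
Proof.
rewrite -(cardsID [set None] h).
have -> : #|h :&: [set None]| = (None \in h).
  case: (boolP (None \in h)) => H.
    have -> : h :&: [set None] = [set None].
      by apply/setP => c; rewrite !inE; case: (c =P None) => [->|_]; rewrite ?H ?andbF ?andbT.
    by rewrite cards1.
  have -> : h :&: [set None] = set0.
    by apply/setP => c; rewrite !inE; case: (c =P None) => [->|_]; rewrite ?(negbTE H) ?andbF ?andbT.
  by rewrite cards0.
have -> : h :\: [set None] = Some @: [set p : 'I_4 * 'I_13 | Some p \in h].
  apply/setP => c; rewrite !inE; apply/idP/imsetP.
    by case: c => [p|] //= H; exists p; rewrite ?inE.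
  by case=> p; rewrite inE => H ->.
rewrite card_imset; last by move=> p1 p2 [].
congr (_ + _).
rewrite -sum1_card.
transitivity (\sum_(s < 4) \sum_(r < 13 | Some (s, r) \in h) 1).
  rewrite pair_big_dep /=; apply: eq_bigl => -[s r]; by rewrite inE.
apply: eq_bigr => s _; rewrite suit_count -sum1_card; apply: eq_bigl => r; by rewrite inE.
Qed.

Lemma part3 (A B C : {set rcard}) :
  [disjoint A & B] -> [disjoint A & C] -> [disjoint B & C] ->
  A != set0 -> B != set0 -> C != set0 ->
  partition [set A; B; C] (A :|: B :|: C).
Proof.
move=> dAB dAC dBC nA nB nC; apply/and3P; split.
- apply/eqP/setP => x; apply/bigcupP/idP.
    case=> X; rewrite !inE => /orP [/orP [/eqP->|/eqP->]|/eqP->] ->; by rewrite ?orbT.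
  rewrite !inE => /orP [/orP [Hx|Hx]|Hx]; [exists A | exists B | exists C] => //; by rewrite !inE eqxx ?orbT.
- apply/trivIsetP => X Y; rewrite !inE => /orP [/orP [/eqP->|/eqP->]|/eqP->] /orP [/orP [/eqP->|/eqP->]|/eqP->];
  rewrite ?eqxx // => _; by rewrite // disjoint_sym.
- by rewrite !inE !(eq_sym set0) (negbTE nA) (negbTE nB) (negbTE nC).
Qed.

Lemma part2 (A B : {set rcard}) :
  [disjoint A & B] -> A != set0 -> B != set0 -> partition [set A; B] (A :|: B).
Proof.
move=> dAB nA nB; apply/and3P; split.
- apply/eqP/setP => x; apply/bigcupP/idP.
    case=> X; rewrite !inE => /orP [/eqP->|/eqP->] ->; by rewrite ?orbT.
  rewrite !inE => /orP [Hx|Hx]; [exists A | exists B] => //; by rewrite !inE eqxx ?orbT.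
- apply/trivIsetP => X Y; rewrite !inE => /orP [/eqP->|/eqP->] /orP [/eqP->|/eqP->];
  rewrite ?eqxx // => _; by rewrite // disjoint_sym.
- by rewrite !inE !(eq_sym set0) (negbTE nA) (negbTE nB).
Qed.

Lemma meld_pure w M : pure_seqb M -> meldb w M.
Proof. by rewrite /meldb => ->. Qed.

Lemma meld_seq w M : seqb w M -> meldb w M.
Proof. by rewrite /meldb /seqb => /orP [] ->; rewrite ?orbT. Qed.

Lemma decl_gen w (P : {set {set rcard}}) h' A B :
  partition P h' -> (forall M, M \in P -> meldb w M) -> A \in P -> B \in P ->
  A != B -> pure_seqb A -> seqb w B -> #|h'| = 13 -> declarableb w h'.
Proof.
move=> HP HM HA HB nAB pA sB Hc.
apply/andP; split; first by apply/eqP.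
apply/existsP; exists P; apply/and3P; split => //.
  by apply/forall_inP.
apply/exists_inP; exists A => //; apply/exists_inP; exists B => //.
by apply/and3P.
Qed.

Lemma bigmin_le (I : finType) (P : pred I) (F : I -> nat) j :
  P j -> \big[minn/13]_(i | P i) F i <= F j.
Proof.
move=> Pj; rewrite unlock.
elim: (index_enum I) (mem_index_enum j) => // x r IH; rewrite inE /= => /predU1P [<-|jr].
  by rewrite Pj geq_minl.
case: ifP => _; last exact: IH jr.
exact: leq_trans (geq_minr _ _) (IH jr).
Qed.

Lemma nonempty_card (A : {set rcard}) n : #|A| = n.+1 -> A != set0.
Proof. by move=> H; apply/negP => /eqP A0; rewrite A0 cards0 in H. Qed.

Lemma disjU (A B C : {set rcard}) :
  [disjoint A & C] -> [disjoint B & C] -> [disjoint A :|: B & C].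
Proof.
move=> d1 d2; rewrite -setI_eq0 setIUl (disjoint_setI0 d1) (disjoint_setI0 d2) setU0 //.
Qed.

Lemma disjUr (A B C : {set rcard}) :
  [disjoint C & A] -> [disjoint C & B] -> [disjoint C & A :|: B].
Proof. by move=> d1 d2; rewrite disjoint_sym disjU // disjoint_sym. Qed.

Lemma cov2 (h A B : {set rcard}) :
  [disjoint A & B] -> #|h :&: (A :|: B)| = #|h :&: A| + #|h :&: B|.
Proof.
move=> d; rewrite setIUr cardsU_disj //.
exact: (disjointW (subsetIr h A) (subsetIr h B) d).
Qed.

Lemma disj_neq (A B : {set rcard}) : [disjoint A & B] -> A != set0 -> A != B.
Proof.
move=> d nA; apply/eqP => E; move: d; rewrite -E -setI_eq0 setIid => /eqP A0.
by rewrite A0 eqxx in nA.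
Qed.

Lemma win_disj_same s : [disjoint win s 1 6 & win s 7 7].
Proof.
apply/pred0P => -[[s' r]|] /=; rewrite !inE //=.
apply/negbTE/negP => /and3P [/andP [_ H1] _ H2]; exact: (posn_disj _ H1 H2).
Qed.

Definition Good (h : {set rcard}) w :=
  exists h', declarableb w h' /\ 5 <= #|h :&: h'|.

Lemma consFull h w s : 5 <= count id (bits h s) -> Good h w.
Proof.
move=> H5.
set A := win s 1 6; set B := win s 7 7.
have d : [disjoint A & B] by apply: win_disj_same.
have cA : #|A| = 6 by apply: card_win.
have cB : #|B| = 7 by apply: card_win.
exists (A :|: B); split.
  apply: (@decl_gen w [set A; B] _ A B).
  - apply: part2 => //; [exact: (nonempty_card _ _ cA) | exact: (nonempty_card _ _ cB)].
  - move=> M; rewrite !inE => /orP [] /eqP ->; apply: meld_pure; exact: pure_win.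
  - by rewrite !inE eqxx.
  - by rewrite !inE eqxx orbT.
  - exact: (disj_neq _ _ d (nonempty_card _ _ cA)).
  - exact: pure_win.
  - by rewrite /seqb pure_win.
  - by rewrite cardsU_disj // cA cB.
rewrite cov2 // !cov_win cnt_full //; exact: size_bits.
Qed.

Lemma consA (h : {set rcard}) (w : 'I_4 * 'I_13) (s t u : 'I_4) : s != t -> s != u -> t != u ->
  4 <= count id (bits h s) -> 3 <= count id (bits h t) -> 1 <= count id (bits h u) ->
  Good h w.
Proof.
move=> st su tu Hs Ht Hu.
have [a1 [a1l a1r c1]] := cnt4 _ (size_bits h s) Hs.
have [a2 [c2 [a2l a2r E2 cc2]]] := cnt3 _ (size_bits h t) Ht.
have [a3 [a3l a3r c3]] := cnt1 _ (size_bits h u) Hu.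
have c2l : 1 <= c2 by case: E2 => ->; lia.
have c2r : c2 + 6 <= 15 by case: E2 => ->; lia.
set A := win s a1 4; set B := win t c2 6; set C := win u a3 3.
have dAB : [disjoint A & B] by apply: win_disj.
have dAC : [disjoint A & C] by apply: win_disj.
have dBC : [disjoint B & C] by apply: win_disj.
have cA : #|A| = 4 by apply: card_win.
have cB : #|B| = 6 by apply: card_win.
have cC : #|C| = 3 by apply: card_win.
have pA : pure_seqb A by apply: pure_win.
have pB : pure_seqb B by apply: pure_win.
have pC : pure_seqb C by apply: pure_win.
exists (A :|: B :|: C); split.
  apply: (@decl_gen w [set A; B; C] _ A B).
  - apply: part3 => //; [exact: (nonempty_card _ _ cA) | exact: (nonempty_card _ _ cB)
                        | exact: (nonempty_card _ _ cC)].
  - move=> M; rewrite !inE => /orP [/orP [] |] /eqP ->; exact: meld_pure.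
  - by rewrite !inE eqxx.
  - by rewrite !inE eqxx orbT.
  - exact: (disj_neq _ _ dAB (nonempty_card _ _ cA)).
  - exact: pA.
  - by rewrite /seqb pB.
  - by rewrite cardsU_disj ?disjU // cardsU_disj // cA cB cC.
rewrite cov2 ?disjU // cov2 // !cov_win; lia.
Qed.

Lemma consB (h : {set rcard}) (w : 'I_4 * 'I_13) (s t : 'I_4) : s != t -> None \in h ->
  3 <= count id (bits h s) -> 3 <= count id (bits h t) -> Good h w.
Proof.
move=> st Hn Hs Ht.
have [a1 [c1 [a1l a1r E1 cc1]]] := cnt3 _ (size_bits h s) Hs.
have [a2 [c2 [a2l a2r E2 cc2]]] := cnt3 _ (size_bits h t) Ht.
have c1l : 1 <= c1 by case: E1 => ->; lia.
have c1r : c1 + 6 <= 15 by case: E1 => ->; lia.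
have c2l : 1 <= c2 by case: E2 => ->; lia.
have c2r : c2 + 6 <= 15 by case: E2 => ->; lia.
set A := win s c1 6; set N := win t c2 6; set T := win t a2 7.
set M := N :|: [set None].
have dAN : [disjoint A & N] by apply: win_disj.
have nA : None \notin A by rewrite inE.
have nN : None \notin N by rewrite inE.
have dA1 : [disjoint A & [set None]] by rewrite disjoint_sym disjoints1.
have dN1 : [disjoint N & [set None]] by rewrite disjoint_sym disjoints1.
have dAM : [disjoint A & M] by apply: disjUr.
have cA : #|A| = 6 by apply: card_win.
have cN : #|N| = 6 by apply: card_win.
have cT : #|T| = 7 by apply: card_win.
have cM : #|M| = 7 by rewrite cardsU_disj // cN cards1.
have pA : pure_seqb A by apply: pure_win.
have pT : pure_seqb T by apply: pure_win.
have NT : N \subset T.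
  apply/subsetP => -[[s' r]|]; rewrite /N /T !inE //= => /andP [-> H] /=.
  exact: (posn_mono a2 c2 r H E2).
have sM : seqb w M.
  rewrite /seqb; apply/orP; right.
  apply/existsP; exists N; apply/existsP; exists [set None]; apply/existsP; exists T.
  rewrite eqxx dN1 /= NT pT /= cN cards1 cT eqxx andbT.
  apply/andP; split.
    by apply/set0Pn; exists None; rewrite inE.
  by rewrite sub1set inE.
exists (A :|: M); split.
  apply: (@decl_gen w [set A; M] _ A M).
  - apply: part2 => //; [exact: (nonempty_card _ _ cA) | exact: (nonempty_card _ _ cM)].
  - move=> X; rewrite !inE => /orP [] /eqP ->; [exact: meld_pure | exact: meld_seq].
  - by rewrite !inE eqxx.
  - by rewrite !inE eqxx orbT.
  - exact: (disj_neq _ _ dAM (nonempty_card _ _ cA)).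
  - exact: pA.
  - exact: sM.
  - by rewrite cardsU_disj // cA cM.
rewrite cov2 // cov2 // !cov_win.
have -> : #|h :&: [set None]| = 1.
  have -> : h :&: [set None] = [set None].
    by apply/setP => c; rewrite !inE; case: (c =P None) => [->|_]; rewrite ?Hn ?andbF ?andbT.
  by rewrite cards1.
lia.
Qed.

Definition o0 : 'I_4 := @Ordinal 4 0 isT.
Definition o1 : 'I_4 := @Ordinal 4 1 isT.
Definition o2 : 'I_4 := @Ordinal 4 2 isT.
Definition o3 : 'I_4 := @Ordinal 4 3 isT.

Lemma sum4 (F : 'I_4 -> nat) : \sum_(s < 4) F s = F o0 + F o1 + F o2 + F o3.
Proof.
rewrite !big_ord_recl big_ord0 addn0 !addnA.
by congr (_ + _ + _ + _); congr F; apply: val_inj.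
Qed.

Lemma ord4_cases (s : 'I_4) : [\/ s = o0, s = o1, s = o2 | s = o3].
Proof.
case: s => [[|[|[|[|m]]]] Hm] //.
- by apply: Or41; apply: val_inj.
- by apply: Or42; apply: val_inj.
- by apply: Or43; apply: val_inj.
- by apply: Or44; apply: val_inj.
Qed.

Lemma pick3 (x y z : nat) : x <= 4 -> y <= 4 -> z <= 4 -> 8 <= x + y + z ->
  [\/ 3 <= x /\ 1 <= y, 3 <= y /\ 1 <= z | 3 <= z /\ 1 <= x].
Proof.
move=> *.
case: (leqP 3 x) => Hx.
  case: (leqP 1 y) => Hy; first by apply: Or31.
  by apply: Or33; split; lia.
case: (leqP 3 y) => Hy; first by apply: Or32; split; lia.
by apply: Or33; split; lia.
Qed.

Lemma count_le13 h s : count id (bits h s) <= 13.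
Proof. by rewrite -(size_bits h s) count_size. Qed.

Lemma goodP (h : {set rcard}) (w : 'I_4 * 'I_13) : #|h| = 13 -> Good h w.
Proof.
move=> Hh.
have Hs := card_h h; rewrite Hh sum4 in Hs.
set K := fun s => count id (bits h s).
have HK : forall s, K s <= 13 by move=> s; exact: count_le13.
case: (pickP (fun s => 5 <= K s)) => [s H5 | N5].
  exact: (consFull _ _ s H5).
have L4 : forall s, K s <= 4 by move=> s; have := N5 s; rewrite /= => /negbT; rewrite -ltnNge.
case: (pickP (fun s => 4 <= K s)) => [s H4 | N4].
  have := L4 o0; have := L4 o1; have := L4 o2; have := L4 o3.
  rewrite /K => l3 l2 l1 l0.
  have nN : (None \in h) <= 1 by case: (None \in h).
  case: (ord4_cases s) => Es; subst s; move: H4; rewrite /K => H4.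
  - have [[Ht Hu]|[Ht Hu]|[Ht Hu]] := pick3 _ _ _ l1 l2 l3 ltac:(lia).
    + by apply: (consA h w o0 o1 o2).
    + by apply: (consA h w o0 o2 o3).
    + by apply: (consA h w o0 o3 o1).
  - have [[Ht Hu]|[Ht Hu]|[Ht Hu]] := pick3 _ _ _ l0 l2 l3 ltac:(lia).
    + by apply: (consA h w o1 o0 o2).
    + by apply: (consA h w o1 o2 o3).
    + by apply: (consA h w o1 o3 o0).
  - have [[Ht Hu]|[Ht Hu]|[Ht Hu]] := pick3 _ _ _ l0 l1 l3 ltac:(lia).
    + by apply: (consA h w o2 o0 o1).
    + by apply: (consA h w o2 o1 o3).
    + by apply: (consA h w o2 o3 o0).
  - have [[Ht Hu]|[Ht Hu]|[Ht Hu]] := pick3 _ _ _ l0 l1 l2 ltac:(lia).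
    + by apply: (consA h w o3 o0 o1).
    + by apply: (consA h w o3 o1 o2).
    + by apply: (consA h w o3 o2 o0).
have L3 : forall s, K s <= 3 by move=> s; have := N4 s; rewrite /= => /negbT; rewrite -ltnNge.
have := L3 o0; have := L3 o1; have := L3 o2; have := L3 o3.
rewrite /K => l3 l2 l1 l0.
have Hn : None \in h.
  case: (boolP (None \in h)) => // Hn; rewrite (negbTE Hn) in Hs; lia.
have nN : (None \in h) = 1 :> nat by rewrite Hn.
apply: (consB h w o0 o1) => //; lia.
Qed.

Theorem proposition2 (h : {set rcard}) (wcj : 'I_4 * 'I_13) :
  #|h| = 13 -> MinDist h wcj <= 8.
Proof.
move=> Hh; have [h' [Hd Hc]] := goodP h wcj Hh.
apply: leq_trans (bigmin_le _ (declarableb wcj) (dist h) h' Hd) _.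
rewrite /dist; lia.
Qed.
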